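(* Let $T$ be a finite semi-simplicial triangulation of a compact surface $S$ (possibly with boundary), and let $\Delta: E(T) \to (0,\pi]$ be an assignment of dihedral angles to the edges of $T$ satisfying the following condition: for every set of faces $\mathcal{F} \subseteq F(T)$, writing $E(\mathcal{F})$ for the set of edges of $T$ incident to some face in $\mathcal{F}$, $$\sum_{e \in E(\mathcal{F})} \Delta(e) \ge \pi |\mathcal{F}|,$$ with equality if and only if $\mathcal{F} = F(T)$ or $E(\mathcal{F}) = \emptyset$. Let $t_1, \ldots, t_n$ be a collection of closed triangles (faces) of $T$, let $\mathcal{F} = t_1 \cup \cdots \cup t_n$, and assume $\mathcal{F} \ne T$. Let $\sum_\partial \mathcal{F}$ denote the sum of $\Delta(e)$ over the boundary edges $e$ of $\mathcal{F}$. Then $$0 < \operatorname{excess} \mathcal{F} < \sum_\partial \mathcal{F}.$$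
   Context: A semi-simplicial triangulation is one in which distinct closed cells may intersect in a collection of lower-dimensional cells. $V(T)$, $E(T)$, $F(T)$ denote the vertices, edges and faces of $T$. For a subcomplex $\mathcal{F}$ of $T$ (here a union of closed faces), its excess is $\operatorname{excess}\mathcal{F} = \sum_{e \in E(\mathcal{F})} \Delta(e) - \pi |F(\mathcal{F})|$, where $E(\mathcal{F})$ is the set of edges of faces of $\mathcal{F}$ and $|F(\mathcal{F})|$ is the number of faces of $\mathcal{F}$. The boundary edges of $\mathcal{F}$ are the edges lying in the intersection of $\mathcal{F}$ with the union $\overline{\mathcal{F}}$ of the closed faces of $T$ not among $t_1,\dots,t_n$ (i.e., edges incident to a face of $\mathcal{F}$ on one side and to a face not in $\mathcal{F}$ on the other). *)

(* Defs.v *)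
From HB Require Import structures.
From mathcomp Require Import all_boot all_order all_algebra.
From mathcomp Require Import reals trigo.
Set Implicit Arguments. Unset Strict Implicit. Unset Printing Implicit Defensive.
Import Order.TTheory GRing.Theory Num.Theory.
Local Open Scope ring_scope.

(* A finite semi-simplicial 2-complex:
   ev e j : the j-th vertex (j = 0,1) of edge e,
   fe f i : the i-th face-map of triangle f, i.e. the edge opposite vertex i. *)

Section Tri.
Variables (V E F : finType) (ev : E -> 'I_2 -> V) (fe : F -> 'I_3 -> E).

Definition fvert (f : F) (k : 'I_3) : V :=
  match val k with
  | 0 => ev (fe f (inord 1)) (inord 0)
  | 1 => ev (fe f (inord 0)) (inord 0)
  | _ => ev (fe f (inord 0)) (inord 1)
  end.

(* semi-simplicial identities d_i d_j = d_(j-1) d_i for i < j *)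
Definition semi_simplicial : Prop :=
  forall f : F,
  [/\ ev (fe f (inord 1)) (inord 0) = ev (fe f (inord 0)) (inord 0),
      ev (fe f (inord 2)) (inord 0) = ev (fe f (inord 0)) (inord 1) &
      ev (fe f (inord 2)) (inord 1) = ev (fe f (inord 1)) (inord 1)].

(* index (in the edge d_i f) of the endpoint which is vertex k of f, k <> i *)
Definition pos (k i : 'I_3) : 'I_2 :=
  inord (if (val k < val i)%N then val k else (val k).-1).

(* corners (f,k) of triangles; adjacency of two corners at v across a
   common side (with the same endpoint of that side being v) *)
Definition cadj (v : V) : rel (F * 'I_3) := fun c c' =>
  [&& fvert c.1 c.2 == v, fvert c'.1 c'.2 == v &
      [exists i : 'I_3, exists i' : 'I_3,
        [&& i != c.2, i' != c'.2, fe c.1 i == fe c'.1 i' &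
            pos c.2 i == pos c'.2 i']]].

(* T is a triangulation of a compact surface (possibly with boundary):
   semi-simplicial; every edge is a side of exactly one or two triangle-sides;
   every vertex lies in some triangle and its link is connected
   (hence, with the previous condition, an arc or a circle). *)
Definition surface_triangulation : Prop :=
  [/\ semi_simplicial,
      forall e : E, (0 < #|[set p : F * 'I_3 | fe p.1 p.2 == e]| <= 2)%N &
      forall v : V,
        (exists c : F * 'I_3, fvert c.1 c.2 = v) /\
        (forall c c' : F * 'I_3, fvert c.1 c.2 = v -> fvert c'.1 c'.2 = v ->
           connect (cadj v) c c')].

Definition edges_of (A : {set F}) : {set E} :=
  [set e | [exists f in A, exists i : 'I_3, fe f i == e]].

Definition boundary_edges (A : {set F}) : {set E} :=
  edges_of A :&: edges_of (~: A).

Variable R : realType.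
Variable D : E -> R.

Definition angle_condition : Prop :=
  forall A : {set F},
    pi * #|A|%:R <= \sum_(e in edges_of A) D e /\
    (\sum_(e in edges_of A) D e = pi * #|A|%:R <-> A = setT \/ edges_of A = set0).

Definition excess (A : {set F}) : R :=
  \sum_(e in edges_of A) D e - pi * #|A|%:R.

End Tri.

(* Main.v *)
Require Import Defs.
From HB Require Import structures.
From mathcomp Require Import all_boot all_order all_algebra.
From mathcomp Require Import reals trigo.
From mathcomp Require Import lra.
Import Order.TTheory GRing.Theory Num.Theory.
Local Open Scope ring_scope.

Lemma edges_ne0 (E F : finType) (fe : F -> 'I_3 -> E) (A : {set F}) :
  A != set0 -> edges_of fe A != set0.
Proof.
case/set0Pn=> f fA; apply/set0Pn; exists (fe f ord0).
rewrite inE; apply/existsP; exists f; rewrite fA /=; apply/existsP; exists ord0; by [].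
Qed.

Lemma excess_pos (R : realType) (E F : finType) (fe : F -> 'I_3 -> E) (D : E -> R)
  (Hcond : angle_condition fe D) (A : {set F}) :
  A != set0 -> A != setT -> 0 < excess fe D A.
Proof.
move=> HA0 HAT; rewrite /excess subr_gt0.
have [Hle Heq] := Hcond A.
rewrite lt_neqAle Hle andbT; apply/eqP => H.
have [] := (proj1 Heq) (esym H).
  by move=> HT; move/eqP: HAT.
by move=> H0; move: (@edges_ne0 _ _ fe _ HA0); rewrite H0 eqxx.
Qed.

Lemma edges_U (E F : finType) (fe : F -> 'I_3 -> E) (A : {set F}) :
  edges_of fe A :|: edges_of fe (~: A) = edges_of fe setT.
Proof.
apply/setP=> e; rewrite !inE; apply/idP/idP.
  case/orP=> /existsP [f /andP [_ H]]; apply/existsP; exists f; by rewrite inE.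
case/existsP=> f /andP [_ H].
case fA: (f \in A).
  by apply/orP; left; apply/existsP; exists f; rewrite fA.
by apply/orP; right; apply/existsP; exists f; rewrite inE fA.
Qed.

Theorem lemma2p5 (R : realType) (V E F : finType)
  (ev : E -> 'I_2 -> V) (fe : F -> 'I_3 -> E)
  (HT : surface_triangulation ev fe)
  (D : E -> R) (HD : forall e : E, 0 < D e <= pi)
  (Hcond : angle_condition fe D)
  (A : {set F}) (HA0 : A != set0) (HAT : A != setT) :
  0 < excess fe D A < \sum_(e in boundary_edges fe A) D e.
Proof.
rewrite excess_pos //=.
have HB0 : ~: A != set0.
  apply: contra HAT => /eqP H; apply/eqP; by rewrite -(setCK A) H setC0.
have HBT : ~: A != setT.
  apply: contra HA0 => /eqP H; apply/eqP; by rewrite -(setCK A) H setCT.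
have HposB := @excess_pos _ _ _ _ _ Hcond _ HB0 HBT.
have [_ [_ HallT]] := Hcond setT.
have Hall := HallT (or_introl erefl).
set EA := edges_of fe A; set EB := edges_of fe (~: A).
have Hsum : \sum_(e in EA) D e + \sum_(e in EB) D e =
    \sum_(e in edges_of fe setT) D e + \sum_(e in boundary_edges fe A) D e.
  rewrite -(@edges_U _ _ fe A) -/EA -/EB.
  rewrite (big_setID (A:=EA :|: EB) EA) /=.
  have -> : (EA :|: EB) :&: EA = EA.
    apply/setP => e; rewrite in_setI in_setU; by case: (e \in EA); case: (e \in EB).
  have -> : (EA :|: EB) :\: EA = EB :\: EA.
    apply/setP => e; rewrite !in_setD in_setU; by case: (e \in EA); case: (e \in EB).
  rewrite (big_setID (A:=EB) EA) /=.
  have -> : boundary_edges fe A = EB :&: EA by rewrite /boundary_edges setIC.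
  by rewrite -!addrA [X in _ + X = _]addrC.
have Hcard : (#|A| + #|~: A|)%N = #|[set: F]|.
  by rewrite cardsC cardsT.
have Hp : pi * #|A|%:R + pi * #|~: A|%:R = pi * #|[set: F]|%:R :> R.
  by rewrite -mulrDr -natrD Hcard.
move: HposB; rewrite /excess -/EA -/EB => HposB.
move: Hsum Hp Hall HposB.
set a := \sum_(e in EA) D e; set b := \sum_(e in EB) D e.
set c := \sum_(e in edges_of fe setT) D e.
set d := \sum_(e in boundary_edges fe A) D e.
set p1 := pi * #|A|%:R; set p2 := pi * #|~: A|%:R; set p3 := pi * #|[set: F]|%:R.
clearbody a b c d p1 p2 p3.
move=> H1 H2 H3 H4; lra.
Qed.
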